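(* Let $P$ be an instance of $k$-means clustering with $z$ outliers, $|P|=n$, let $\delta,\xi\in(0,1)$, let $S$ be a finite multiset of points of $P$ satisfying, for every $1\le j\le k$, $$\sum_{q\in S\cap C^*_j}\|q-o^*_j\|^2\le(1+\delta)\frac{|S|}{n}\Big(\sum_{p\in C^*_j}\|p-o^*_j\|^2+\xi|C^*_j|\mathcal{L}^2\Big),$$ let $0<z'<|S|$ with $|S\setminus P_{opt}|\le z'$, let $H$ be a set of $k$ centers in $\mathbb{R}^D$ with $\Delta^{-z'}_2(S,H)\le c\cdot\min_{|H'|=k}\Delta^{-z'}_2(S,H')$ for some $c\ge1$, and let $S_{in}\subseteq S$ be the $|S|-z'$ points of $S$ attaining $\Delta^{-z'}_2(S,H)$ (i.e., $S$ minus its $z'$ points farthest from $H$). Then $$Cost(S_{in}\cap P_{opt},H)\le(1+\delta)\frac{|S|}{n}\cdot c\cdot\big(Cost(P_{opt},O^* )+(n-z)\xi\mathcal{L}^2\big).$$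
   Context: $P\subset\mathbb{R}^D$, $0<z<n$. $dist(p,H)=\min_{q\in H}\|p-q\|$; for a finite multiset $Q$ and $0<w<|Q|$, $\Delta^{-w}_2(Q,H)=\min\{\frac{1}{|Q'|}\sum_{p\in Q'}dist(p,H)^2:Q'\subseteq Q,|Q'|=|Q|-w\}$; $Cost(X,Y)=\sum_{q\in X}dist(q,Y)^2$ (with multiplicity). $P_{opt}\subset P$ with $|P_{opt}|=n-z$ is the set of inliers of an optimal solution of $k$-means with $z$ outliers, $C^*_1,\dots,C^*_k$ the optimal clusters forming $P_{opt}$, $o^*_j$ the mean of $C^*_j$, $O^*=\{o^*_1,\dots,o^*_k\}$, $\mathcal{L}=\max_j\max_{p,q\in C^*_j}\|p-q\|$. *)

(* Defs.v *)
From mathcomp Require Import all_boot all_order all_algebra reals.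
Set Implicit Arguments. Unset Strict Implicit. Unset Printing Implicit Defensive.
Import Order.TTheory GRing.Theory Num.Theory.
Local Open Scope ring_scope.

Section KMeansDefs.
Variables (R : realType) (D : nat).

Definition point := 'rV[R]_D.

Definition sqnorm (v : point) : R := \sum_(i < D) (v ord0 i) ^+ 2.
Definition sqdist (p q : point) : R := sqnorm (p - q).
Definition edist (p q : point) : R := Num.sqrt (sqdist p q).

(* dist(p,H)^2 = min_{j} ||p - H j||^2, for a family H of k centers.
   The seed of the min is the sum of all terms, which is >= each
   (nonnegative) term, so for k >= 1 this is exactly the minimum. *)
Definition dist2 (k : nat) (H : 'I_k -> point) (p : point) : R :=
  \big[Num.min/ \sum_(j < k) sqdist p (H j)]_(j < k) sqdist p (H j).

(* Cost(X,H) for a multiset X of points (given as a seq, with multiplicity) *)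
Definition cost (k : nat) (X : seq point) (H : 'I_k -> point) : R :=
  \sum_(p <- X) dist2 H p.

(* min over sub-multisets Q' of Q with |Q'| = |Q| - w of Cost(Q',H);
   sub-multisets are given by masks. The seed Cost(Q,H) is >= every
   candidate, so this is the minimum. *)
Definition trimmed_cost (k : nat) (Q : seq point) (w : nat) (H : 'I_k -> point) : R :=
  \big[Num.min/ cost Q H]_(m : (size Q).-tuple bool | count id m == (size Q - w)%N)
     cost (mask m Q) H.

Definition Delta2 (k : nat) (Q : seq point) (w : nat) (H : 'I_k -> point) : R :=
  trimmed_cost Q w H / (size Q - w)%:R.

Definition cluster (n k : nat) (Popt : {set 'I_n}) (sigma : 'I_n -> 'I_k) (j : 'I_k)
  : {set 'I_n} := [set i in Popt | sigma i == j].

(* L = max_j max_{p,q in C_j} ||p - q|| (0 if all clusters are empty) *)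
Definition diamL (n k : nat) (x : 'I_n -> point) (Popt : {set 'I_n})
  (sigma : 'I_n -> 'I_k) : R :=
  \big[Num.max/0]_(j < k) \big[Num.max/0]_(p in cluster Popt sigma j)
     \big[Num.max/0]_(q in cluster Popt sigma j) edist (x p) (x q).

End KMeansDefs.

(* Main.v *)
Require Import Defs.
From mathcomp Require Import all_boot all_order all_algebra reals.
Import Order.TTheory GRing.Theory Num.Theory.
Local Open Scope ring_scope.

Section Aux.
Local Set Implicit Arguments.
Variables (R : realType) (D : nat).

Lemma sqdist_ge0 (p q : 'rV[R]_D) : 0 <= sqdist p q.
Proof. by rewrite /sqdist /sqnorm; apply: sumr_ge0 => i _; exact: sqr_ge0. Qed.

Lemma dist2_le k (H : 'I_k -> 'rV[R]_D) p j : dist2 H p <= sqdist p (H j).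
Proof. by rewrite /dist2 (bigD1 j) //= ge_min lexx. Qed.

Lemma dist2_ge k (H : 'I_k -> 'rV[R]_D) p a :
  (forall j, a <= sqdist p (H j)) -> a <= \sum_j sqdist p (H j) -> a <= dist2 H p.
Proof.
move=> hj hs; rewrite /dist2; apply: (big_ind (fun v => a <= v)) => //.
by move=> u v hu hv; rewrite le_min hu hv.
Qed.

Lemma dist2_ge0 k (H : 'I_k -> 'rV[R]_D) p : 0 <= dist2 H p.
Proof.
apply: dist2_ge => [j|]; first exact: sqdist_ge0.
by apply: sumr_ge0 => j _; exact: sqdist_ge0.
Qed.

Lemma mask_sub (T : Type) (f : T -> R) (s : seq T) :
  (forall y, 0 <= f y) -> forall (b : bitseq), size b = size s ->
  forall t, (t <= count id b)%N -> exists b' : bitseq,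
  [/\ size b' = size s, count id b' = t &
      \sum_(y <- mask b' s) f y <= \sum_(y <- mask b s) f y].
Proof.
move=> f0; elim: s => [|y s IH] [|c b] //=.
  by move=> _ t; rewrite leqn0 => /eqP ->; exists [::].
case=> hb t; case: c => /=.
- case: t => [|t] ht.
  + have [b1 [h1 h2 h3]] := IH b hb 0%N (leq0n _).
    exists (false :: b1); split => //=; rewrite ?h1 ?h2 //.
    by rewrite big_cons (le_trans h3) // lerDr.
  + have [b1 [h1 h2 h3]] := IH b hb t ht.
    exists (true :: b1); split => /=; rewrite ?h1 ?h2 //.
    by rewrite !big_cons lerD2l.
- move=> ht; have [b1 [h1 h2 h3]] := IH b hb t ht.
  by exists (false :: b1); split => /=; rewrite ?h1 ?h2.
Qed.

Lemma part_sum n k (Popt : {set 'I_n}) (sigma : 'I_n -> 'I_k) (s : seq 'I_n)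
  (g : 'I_n -> 'I_k -> R) :
  \sum_(j < k) \sum_(i <- s | i \in cluster Popt sigma j) g i j
  = \sum_(i <- s | i \in Popt) g i (sigma i).
Proof.
rewrite [RHS](eq_bigr (fun i => \sum_(j | j == sigma i) g i j)); last first.
  by move=> i _; rewrite big_pred1_eq.
rewrite [RHS](exchange_big_dep predT) //=.
apply: eq_bigr => j _; apply: eq_bigl => i.
by rewrite /cluster inE eq_sym.
Qed.

End Aux.
Arguments mask_sub {R T}. Arguments part_sum {R n k}.

Theorem lemma9 (R : realType) (D n k z : nat)
  (* the instance P = {x i | i < n} in R^D, |P| = n *)
  (x : 'I_n -> 'rV[R]_D) (x_inj : injective x)
  (k_gt0 : (0 < k)%N) (z_gt0 : (0 < z)%N) (z_ltn : (z < n)%N)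
  (* an optimal solution: inliers Popt, centers O, clusters C j *)
  (Popt : {set 'I_n}) (O : 'I_k -> 'rV[R]_D) (sigma : 'I_n -> 'I_k)
  (Popt_card : #|Popt| = (n - z)%N)
  (opt : forall (I' : {set 'I_n}) (H' : 'I_k -> 'rV[R]_D),
      #|I'| = (n - z)%N ->
      cost [seq x i | i <- enum Popt] O <= cost [seq x i | i <- enum I'] H')
  (sigma_nearest : forall i, i \in Popt -> forall j : 'I_k,
      sqdist (x i) (O (sigma i)) <= sqdist (x i) (O j))
  (O_mean : forall j : 'I_k,
      cluster Popt sigma j != set0 ->
      O j = (#|cluster Popt sigma j|%:R)^-1 *:
              \sum_(i in cluster Popt sigma j) x i)
  (delta xi c : R)
  (delta_gt0 : 0 < delta) (delta_lt1 : delta < 1)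
  (xi_gt0 : 0 < xi) (xi_lt1 : xi < 1)
  (* the multiset S of points of P, given by indices with multiplicity *)
  (S : seq 'I_n)
  (HS : forall j : 'I_k,
      \sum_(i <- S | i \in cluster Popt sigma j) sqdist (x i) (O j)
      <= (1 + delta) * ((size S)%:R / n%:R) *
         (\sum_(i in cluster Popt sigma j) sqdist (x i) (O j)
          + xi * #|cluster Popt sigma j|%:R *
            diamL x Popt sigma ^+ 2))
  (z' : nat) (z'_gt0 : (0 < z')%N) (z'_lt : (z' < size S)%N)
  (HSout : (count (fun i => i \notin Popt) S <= z')%N)
  (H : 'I_k -> 'rV[R]_D) (c_ge1 : 1 <= c)
  (H_approx : forall H' : 'I_k -> 'rV[R]_D,
      Delta2 [seq x i | i <- S] z' H <= c * Delta2 [seq x i | i <- S] z' H')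
  (* S_in = mask m S : |S| - z' points of S attaining Delta(S,H) *)
  (m : (size S).-tuple bool)
  (m_card : count id m = (size S - z')%N)
  (m_attains : cost [seq x i | i <- mask m S] H / (size S - z')%:R
               = Delta2 [seq x i | i <- S] z' H) :
  cost [seq x i | i <- mask m S & i \in Popt] H
  <= (1 + delta) * ((size S)%:R / n%:R) * c *
     (cost [seq x i | i <- enum Popt] O
      + (n - z)%:R * xi *
        diamL x Popt sigma ^+ 2).
Proof.
set A := (1 + delta) * ((size S)%:R / n%:R).
set L2 := diamL x Popt sigma ^+ 2.
have c0 : 0 <= c by apply: le_trans c_ge1.
have A0 : 0 <= A.
  by rewrite /A mulr_ge0 // ?divr_ge0 // addr_ge0 // ltW.
have st1 : cost [seq x i | i <- mask m S & i \in Popt] H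
           <= cost [seq x i | i <- mask m S] H.
  rewrite /cost !big_map big_filter [X in _ <= X](bigID (fun i => i \in Popt)) /=.
  by rewrite lerDl sumr_ge0 // => i _; exact: dist2_ge0.
have N0 : (size S - z')%:R != 0 :> R.
  by rewrite pnatr_eq0 -lt0n subn_gt0.
have st2 : cost [seq x i | i <- mask m S] H
           <= c * trimmed_cost [seq x i | i <- S] z' O.
  have h := H_approx O; rewrite -m_attains /Delta2 size_map in h.
  rewrite -(divfK N0 (cost _ H)) -(divfK N0 (trimmed_cost _ _ _)) mulrA.
  by rewrite ler_wpM2r // ?ler0n.
have st3 : trimmed_cost [seq x i | i <- S] z' O
           <= \sum_(i <- S | i \in Popt) dist2 O (x i).
  have hc : (size S - z' <= count id [seq i \in Popt | i <- S])%N.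
    rewrite count_map.
    have := count_predC (fun i => i \in Popt) S.
    move: HSout; set a := count _ S; set b := count _ S => h1 h2.
    rewrite -h2; rewrite /b; move: h1; rewrite /a => h1.
    by apply: (leq_trans (leq_sub2l _ h1)); rewrite addnK.
  have [b1 [h1 h2 h3]] := mask_sub (fun i => dist2 O (x i)) S (fun y => dist2_ge0 O (x y))
     _ (size_map _ S) _ hc.
  have hs : size b1 == size [seq x i | i <- S] by rewrite size_map h1.
  apply: (le_trans (y := cost (mask (Tuple hs) [seq x i | i <- S]) O)).
    rewrite /trimmed_cost (bigD1 (Tuple hs)) /=; last by rewrite h2 size_map.
    by rewrite ge_min lexx.
  rewrite /cost -map_mask big_map (le_trans h3) //.
  by rewrite -filter_mask big_filter.
have st4 : \sum_(i <- S | i \in Popt) dist2 O (x i)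
           <= A * (cost [seq x i | i <- enum Popt] O + (n - z)%:R * xi * L2).
  have dsig : forall i, i \in Popt -> dist2 O (x i) = sqdist (x i) (O (sigma i)).
    move=> i hi; apply/le_anti; rewrite dist2_le /=.
    apply: dist2_ge; first exact: sigma_nearest.
    rewrite (bigD1 (sigma i)) //= lerDl sumr_ge0 // => j _; exact: sqdist_ge0.
  rewrite (eq_bigr (fun i => sqdist (x i) (O (sigma i)))) //.
  rewrite -(part_sum Popt sigma _ (fun i j => sqdist (x i) (O j))).
  apply: (le_trans (ler_sum _ (fun j _ => HS j))).
  rewrite -mulr_sumr ler_wpM2l // big_split /= lerD //.
    rewrite /cost big_map big_enum /=.
    rewrite (part_sum Popt sigma _ (fun i j => sqdist (x i) (O j))) /=.
  by rewrite le_eqVlt; apply/orP; left; apply/eqP; apply: eq_bigr => i hi; rewrite dsig.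
  have hcard : forall j, #|cluster Popt sigma j|%:R = \sum_(i in cluster Popt sigma j) (1 : R).
    by move=> j; rewrite sumr_const.
  have hsum : \sum_(j < k) (#|cluster Popt sigma j|%:R : R) = (n - z)%:R.
    under eq_bigr do rewrite hcard.
    by rewrite (part_sum Popt sigma _ (fun _ _ => (1 : R))) sumr_const Popt_card.
  rewrite -mulr_suml -mulr_sumr hsum [xi * _]mulrC.
  by rewrite lexx.
apply: (le_trans st1); apply: (le_trans st2).
have h := ler_wpM2l c0 (le_trans st3 st4).
apply: (le_trans h).
by rewrite mulrA [c * A]mulrC lexx.
Qed.
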